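(* Let $\epsilon>0$, let $\mathbf{w}\in\mathbb{R}^d$ be non-increasing, and let $1\le k\le d-1$ with $\mathbf{w}^k_{max}>\mathbf{w}^k_{min}$. The additive mechanism with parameters $(\epsilon,\mathbf{w},k)$ satisfies $\epsilon$-local differential privacy: for all scored votes $v,v'\in\mathbb{D}_v$ and every $S\in\mathcal{C}^k$, $\Pr[S\mid v]\le e^\epsilon\Pr[S\mid v']$.
   Context: Candidates are $C_1,\dots,C_d$; a vote is a linear ordering; with non-increasing score vector $\mathbf{w}$ the scored vote $v$ assigns score $w_j$ to the candidate at rank $j$; $\mathbb{D}_v$ is the set of permutations of $\mathbf{w}$. Let $\mathcal{C}^k$ be the set of $k$-element subsets of $\{C_1,\dots,C_d\}$, $\mathbf{w}^k_{max}=\sum_{j=1}^kw_j$, $\mathbf{w}^k_{min}=\sum_{j=d-k+1}^dw_j$, $W=\sum_{j=1}^dw_j$. The additive mechanism on input $v$ outputs $S\in\mathcal{C}^k$ with probability $$\Pr[S\mid v]=\frac{\sum_{C_{j'}\in S}v_{j'}-\mathbf{w}^k_{min}}{\mathbf{w}^k_{max}-\mathbf{w}^k_{min}}\cdot\frac{e^\epsilon-1}{\Phi}+\frac1\Phi,\qquad \Phi=\binom dk\frac{\frac kd(e^\epsilon-1)W-e^\epsilon\mathbf{w}^k_{min}+\mathbf{w}^k_{max}}{\mathbf{w}^k_{max}-\mathbf{w}^k_{min}},$$ and releases the private view $\tilde v_j=a_k\cdot[C_j\in S]-b_k$ ($j=1,\dots,d$) for constants $a_k,b_k$ depending only on $\epsilon,\mathbf{w},k,d$.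 *)

(* Defs.v *)
From HB Require Import structures.
From mathcomp Require Import all_boot all_order all_algebra perm.
From mathcomp Require Import reals.
From mathcomp Require Import sequences exp.
Set Implicit Arguments. Unset Strict Implicit. Unset Printing Implicit Defensive.
Import Order.TTheory GRing.Theory Num.Theory.
Local Open Scope ring_scope.

(* Candidates C_1..C_d are indexed by 'I_d (C_{j+1} <-> j).  A score vector
   w : 'I_d -> R; rank j+1 gets score w j. *)

Definition nonincreasing (R : realType) (d : nat) (w : 'I_d -> R) : Prop :=
  forall i j : 'I_d, (i <= j)%N -> w j <= w i.

Definition scored_vote (R : realType) (d : nat) (w : 'I_d -> R) (v : 'I_d -> R)
  : Prop := exists s : 'S_d, forall j : 'I_d, v j = w (s j).

(* w^k_max = sum of the k largest scores (first k ranks). *)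
Definition wmax (R : realType) (d : nat) (w : 'I_d -> R) (k : nat) : R :=
  \sum_(j < d | (j < k)%N) w j.

(* w^k_min = sum of the k smallest scores (last k ranks d-k+1..d). *)
Definition wmin (R : realType) (d : nat) (w : 'I_d -> R) (k : nat) : R :=
  \sum_(j < d | (d - k <= j)%N) w j.

Definition Wsum (R : realType) (d : nat) (w : 'I_d -> R) : R := \sum_(j < d) w j.

Definition Phi (R : realType) (eps : R) (d : nat) (w : 'I_d -> R) (k : nat) : R :=
  ('C(d, k))%:R *
  ((k%:R / d%:R) * (expR eps - 1) * Wsum w - expR eps * wmin w k + wmax w k)
  / (wmax w k - wmin w k).

(* Pr[S | v] of the additive mechanism with parameters (eps, w, k). *)
Definition additive_prob (R : realType) (eps : R) (d : nat) (w : 'I_d -> R)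
  (k : nat) (v : 'I_d -> R) (S : {set 'I_d}) : R :=
  (\sum_(j in S) v j - wmin w k) / (wmax w k - wmin w k)
    * ((expR eps - 1) / Phi eps w k)
  + 1 / Phi eps w k.

(* Main.v *)
Require Import Defs.
From HB Require Import structures.
From mathcomp Require Import all_boot all_order all_algebra perm.
From mathcomp Require Import reals.
From mathcomp Require Import sequences exp.
From mathcomp Require Import zify ring lra.
Import Order.TTheory GRing.Theory Num.Theory.
Local Open Scope ring_scope.

Lemma card_lt (d k : nat) : (k <= d)%N -> #|[set j : 'I_d | (j < k)%N]| = k.
Proof.
move=> kd.
have -> : [set j : 'I_d | (j < k)%N] = [set widen_ord kd i | i : 'I_k].
  apply/setP=> j; rewrite inE; apply/idP/imsetP.
    by move=> jk; exists (Ordinal jk) => //; apply: val_inj.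
  by case=> i _ ->; rewrite /= ltn_ord.
by rewrite card_imset ?card_ord // => a b /(congr1 val) /= /val_inj.
Qed.

Lemma card_ge (d k : nat) : (k <= d)%N -> #|[set j : 'I_d | (d - k <= j)%N]| = k.
Proof.
move=> kd.
have -> : [set j : 'I_d | (d - k <= j)%N] = ~: [set j : 'I_d | (j < d - k)%N].
  by apply/setP=> j; rewrite !inE -leqNgt.
by rewrite cardsCs setCK card_ord card_lt ?leq_subr // subKn.
Qed.

Lemma sum_le_card (R : realType) (d : nat) (w : 'I_d -> R) (A B : {set 'I_d}) (t : R) :
  #|A| = #|B| ->
  (forall j, j \in A :\: B -> w j <= t) ->
  (forall j, j \in B :\: A -> t <= w j) ->
  \sum_(j in A) w j <= \sum_(j in B) w j.
Proof.
move=> cAB hA hB.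
rewrite (big_setID B) [X in _ <= X](big_setID A) /= setIC lerD2l.
have cD : #|A :\: B| = #|B :\: A|.
  have hh1 := cardsID B A; have hh2 := cardsID A B.
  rewrite setIC in hh2. apply/eqP; rewrite -(eqn_add2l #|A :&: B|) hh1 hh2 cAB //.
apply: (@le_trans _ _ (\sum_(j in A :\: B) t)); first exact: ler_sum.
rewrite sumr_const cD -sumr_const; exact: ler_sum.
Qed.

Lemma bounds (R : realType) (d : nat) (w : 'I_d -> R) (k : nat) (A : {set 'I_d}) :
  nonincreasing w -> (1 <= k)%N -> (k <= d - 1)%N -> #|A| = k ->
  wmin w k <= \sum_(j in A) w j <= wmax w k.
Proof.
move=> hw k1 kd cA.
have kd' : (k <= d)%N by apply: leq_trans kd (leq_subr _ _).
have k1d : (k.-1 < d)%N by rewrite prednK // (leq_trans kd') .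
have dkd : (d - k < d)%N by rewrite ltn_subrL (leq_trans _ kd') ?andbT //; lia.
apply/andP; split.
  have -> : wmin w k = \sum_(j in [set j : 'I_d | (d - k <= j)%N]) w j.
    by apply: eq_bigl => j; rewrite inE.
  apply: (@sum_le_card _ _ _ _ _ (w (Ordinal dkd))).
  - by rewrite card_ge.
  - by move=> j; rewrite !inE => /andP[_ hj]; apply: hw.
  - move=> j; rewrite !inE -ltnNge => /andP[hj _]; apply: hw; rewrite /=; lia.
have -> : wmax w k = \sum_(j in [set j : 'I_d | (j < k)%N]) w j.
  by apply: eq_bigl => j; rewrite inE.
apply: (@sum_le_card _ _ _ _ _ (w (Ordinal k1d))).
- by rewrite card_lt.
- move=> j; rewrite !inE -leqNgt => /andP[hj _]; apply: hw; rewrite /=; lia.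
- by move=> j; rewrite !inE => /andP[_ hj]; apply: hw => /=; lia.
Qed.

Lemma avg_ge (R : realType) (d : nat) (w : 'I_d -> R) (k : nat) :
  nonincreasing w -> (1 <= k)%N -> (k <= d - 1)%N ->
  wmin w k <= k%:R / d%:R * Wsum w.
Proof.
move=> hw k1 kd.
have kd' : (k <= d)%N by apply: leq_trans kd (leq_subr _ _).
have dkd : (d - k < d)%N by lia.
set t := w (Ordinal dkd).
set B := [set j : 'I_d | (d - k <= j)%N].
have hm : wmin w k = \sum_(j in B) w j by apply: eq_bigl => j; rewrite inE.
have hW : Wsum w = \sum_(j in B) w j + \sum_(j in ~: B) w j.
  rewrite /Wsum (bigID (mem B)) /=; congr (_ + _); apply: eq_bigl => j; by rewrite !inE.
have hB : \sum_(j in B) w j <= k%:R * t.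
  apply: (@le_trans _ _ (\sum_(j in B) t)).
    by apply: ler_sum => j; rewrite inE => hj; apply: hw.
  by rewrite sumr_const card_ge // mulr_natl.
have hT : (d - k)%:R * t <= \sum_(j in ~: B) w j.
  apply: (@le_trans _ _ (\sum_(j in ~: B) t)); last first.
    by apply: ler_sum => j; rewrite !inE -ltnNge => hj; apply: hw => /=; lia.
  rewrite sumr_const cardsCs setCK card_ord card_ge // mulr_natl.
  by [].
have dpos : (0 < d%:R :> R) by rewrite ltr0n; lia.
rewrite hm hW mulrAC ler_pdivlMr //.
rewrite natrB // in hT.
have k0 : (0 <= k%:R :> R) by [].
have dk0 : (0 <= d%:R - k%:R :> R) by rewrite subr_ge0 ler_nat.
nra.
Qed.

Lemma vote_bounds (R : realType) (d : nat) (w : 'I_d -> R) (k : nat) v (S : {set 'I_d}) :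
  nonincreasing w -> (1 <= k)%N -> (k <= d - 1)%N -> scored_vote w v -> #|S| = k ->
  wmin w k <= \sum_(j in S) v j <= wmax w k.
Proof.
move=> hw k1 kd [s hs] cS.
have -> : \sum_(j in S) v j = \sum_(j in [set s x | x in S]) w j.
  rewrite big_imset /=; last by move=> a b _ _; apply: perm_inj.
  by apply: eq_bigr => j _; rewrite hs.
by apply: bounds => //; rewrite card_imset //; apply: perm_inj.
Qed.

Theorem theorem6p2 (R : realType) (eps : R) (d : nat) (w : 'I_d -> R) (k : nat) :
  0 < eps ->
  nonincreasing w ->
  (1 <= k)%N -> (k <= d - 1)%N ->
  wmin w k < wmax w k ->
  forall v v' : 'I_d -> R, scored_vote w v -> scored_vote w v' ->
  forall S : {set 'I_d}, #|S| = k ->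
    additive_prob eps w k v S <= expR eps * additive_prob eps w k v' S.
Proof.
move=> he hw k1 kd hmM v v' hv hv' S cS.
have e1 : 1 <= expR eps by apply/ltW; rewrite expR_gt1.
have D0 : 0 < wmax w k - wmin w k by rewrite subr_gt0.
have hav := @avg_ge _ _ _ _ hw k1 kd.
have Phi0 : 0 < Phi eps w k.
  rewrite /Phi; apply: divr_gt0 => //; apply: mulr_gt0.
    by rewrite ltr0n bin_gt0; lia.
  have : (expR eps - 1) * wmin w k <= k%:R / d%:R * (expR eps - 1) * Wsum w.
    by rewrite [k%:R / d%:R * _]mulrC -mulrA ler_wpM2l // subr_ge0.
  nra.
have /andP[l1 u1] := @vote_bounds _ _ _ _ _ S hw k1 kd hv cS.
have /andP[l2 u2] := @vote_bounds _ _ _ _ _ S hw k1 kd hv' cS.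
rewrite /additive_prob.
set a := (\sum_(j in S) v j - wmin w k) / (wmax w k - wmin w k).
set a' := (\sum_(j in S) v' j - wmin w k) / (wmax w k - wmin w k).
have a0 : 0 <= a by apply: divr_ge0; rewrite ?subr_ge0 // ltW.
have a'0 : 0 <= a' by apply: divr_ge0; rewrite ?subr_ge0 // ltW.
have a1 : a <= 1 by rewrite /a ler_pdivrMr // mul1r lerD2r.
set P := Phi eps w k.
set q := 1 / P.
have q0 : 0 < q by rewrite /q divr_gt0.
have -> : (expR eps - 1) / P = (expR eps - 1) * q by rewrite /q mul1r.
set e := expR eps.
have hh1 : a * (e - 1) <= e - 1.
  have : 0 <= (1 - a) * (e - 1) by rewrite mulr_ge0 // subr_ge0.
  rewrite mulrBl mul1r subr_ge0 //.
have hh2 : 0 <= e * (a' * (e - 1)).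
  apply: mulr_ge0; first exact: le_trans ler01 e1.
  by apply: mulr_ge0; rewrite // subr_ge0.
have -> : a * ((e - 1) * q) + q = q * (a * (e - 1) + 1) by ring.
have -> : e * (a' * ((e - 1) * q) + q) = q * (e * (a' * (e - 1)) + e) by ring.
rewrite ler_pM2l //.
lra.
Qed.
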